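(* Let $X$ be a real Hilbert space, let $A,B\colon X\rightrightarrows X$ be maximally monotone, let $T:=T_{(A,B)}$, $v:=P_{\overline{\operatorname{ran}}(\mathrm{Id}-T)}0$. Then: (i) $Z_v=J_{-v+A}(\operatorname{Fix}(T_{-v}))=J_A(\operatorname{Fix}(T_{-v})+v)=J_A(\operatorname{Fix}(v+T))$; (ii) $K_v=(\mathrm{Id}-J_{-v+A})(\operatorname{Fix}(T_{-v}))$; (iii) $K_v\neq\varnothing\iff Z_v\neq\varnothing\iff v\in\operatorname{ran}(\mathrm{Id}-T)$.
   Context: $J_A:=(\mathrm{Id}+A)^{-1}$ is the resolvent, $R_A:=2J_A-\mathrm{Id}$, and the Douglas–Rachford operator is $T_{(A,B)}:=\tfrac12(\mathrm{Id}+R_BR_A)=\mathrm{Id}-J_A+J_BR_A$. For an operator $C$ and $w\in X$: $C^{\vee}:=(-\mathrm{Id})\circ C\circ(-\mathrm{Id})$, $C^{-\vee}:=(C^{-1})^\vee$. The normal pair is $({}_vA,B_v)$ with ${}_vA:=-v+A$ (i.e. $x\mapsto Ax-v$) and $B_v:=B(\cdot-v)$. The set of normal solutions is $Z_v:=({}_vA+B_v)^{-1}(0)$ and the set of dual normal solutions is $K_v:=(({}_vA)^{-1}+(B_v)^{-\vee})^{-1}(0)$. $T_{-v}x:=T(x+v)$, $(v+T)x:=v+Tx$, $\operatorname{Fix}$ is the fixed point set, and $\overline{\operatorname{ran}}$ denotes closure of the range. *)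

(* Defs.v *)
From Stdlib Require Import Reals.
Open Scope R_scope.

Record Hilbert := {
  hcar :> Type;
  hzero : hcar;
  hadd : hcar -> hcar -> hcar;
  hopp : hcar -> hcar;
  hscal : R -> hcar -> hcar;
  hinner : hcar -> hcar -> R;
  hadd_assoc : forall x y z, hadd x (hadd y z) = hadd (hadd x y) z;
  hadd_comm : forall x y, hadd x y = hadd y x;
  hadd_0 : forall x, hadd x hzero = x;
  hadd_opp : forall x, hadd x (hopp x) = hzero;
  hscal_assoc : forall a b x, hscal a (hscal b x) = hscal (a * b) x;
  hscal_1 : forall x, hscal 1 x = x;
  hscal_distr_l : forall a x y, hscal a (hadd x y) = hadd (hscal a x) (hscal a y);
  hscal_distr_r : forall a b x, hscal (a + b) x = hadd (hscal a x) (hscal b x);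
  hinner_sym : forall x y, hinner x y = hinner y x;
  hinner_add_l : forall x y z, hinner (hadd x y) z = hinner x z + hinner y z;
  hinner_scal_l : forall a x y, hinner (hscal a x) y = a * hinner x y;
  hinner_pos : forall x, 0 <= hinner x x;
  hinner_def : forall x, hinner x x = 0 -> x = hzero;
  hcomplete : forall u : nat -> hcar,
    (forall eps, 0 < eps -> exists N, forall m n, (N <= m)%nat -> (N <= n)%nat ->
        sqrt (hinner (hadd (u m) (hopp (u n))) (hadd (u m) (hopp (u n)))) < eps) ->
    exists l, forall eps, 0 < eps -> exists N, forall n, (N <= n)%nat ->
        sqrt (hinner (hadd (u n) (hopp l)) (hadd (u n) (hopp l))) < eps
}.

Arguments hzero {h}.
Arguments hadd {h}.
Arguments hopp {h}.
Arguments hscal {h}.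
Arguments hinner {h}.

Section Ops.
Variable X : Hilbert.

Definition hsub (x y : X) : X := hadd x (hopp y).
Definition hnorm (x : X) : R := sqrt (hinner x x).

(* Subsets of X and set-valued operators X ⇉ X (given by their graphs:
   [A x y] means y ∈ A x). *)
Definition subset := X -> Prop.
Definition oper := X -> X -> Prop.

Definition set_eq (S1 S2 : subset) : Prop := forall x, S1 x <-> S2 x.
Definition nonempty (S : subset) : Prop := exists x, S x.

Definition monotone (A : oper) : Prop :=
  forall x u y w, A x u -> A y w -> 0 <= hinner (hsub x y) (hsub u w).

Definition maximally_monotone (A : oper) : Prop :=
  monotone A /\
  forall x u, (forall y w, A y w -> 0 <= hinner (hsub x y) (hsub u w)) -> A x u.

Definition op_inv (C : oper) : oper := fun x y => C y x.
Definition op_add (C D : oper) : oper :=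
  fun x y => exists c d, C x c /\ D x d /\ y = hadd c d.
Definition image (C : oper) (S : subset) : subset :=
  fun y => exists x, S x /\ C x y.
Definition zeros (C : oper) : subset := fun x => C x hzero.
Definition Fix (C : oper) : subset := fun x => C x x.
Definition ran (C : oper) : subset := fun y => exists x, C x y.

(* resolvent J_A = (Id + A)^{-1}: p ∈ J_A x  iff  x ∈ p + A p *)
Definition resolvent (A : oper) : oper := fun x p => A p (hsub x p).
Definition reflected (A : oper) : oper :=
  fun x y => exists p, resolvent A x p /\ y = hsub (hscal 2 p) x.
(* Douglas–Rachford operator T_(A,B) = 1/2 (Id + R_B R_A) *)
Definition DR (A B : oper) : oper :=
  fun x y => exists r s, reflected A x r /\ reflected B r s /\
                         y = hscal (1/2) (hadd x s).
Definition id_minus (C : oper) : oper :=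
  fun x y => exists z, C x z /\ y = hsub x z.

(* C^∨ = (-Id) ∘ C ∘ (-Id) and C^{-∨} = (C^{-1})^∨ *)
Definition vee (C : oper) : oper := fun x y => C (hopp x) (hopp y).
Definition inv_vee (C : oper) : oper := vee (op_inv C).

(* _vA = -v + A,  B_v = B(· - v) *)
Definition lshift (v : X) (A : oper) : oper := fun x y => A x (hadd y v).
Definition rshift (B : oper) (v : X) : oper := fun x y => B (hsub x v) y.

(* T_{-v} x = T(x+v),  (v+T) x = v + T x *)
Definition pre_shift (T : oper) (v : X) : oper := fun x y => T (hadd x v) y.
Definition post_shift (v : X) (T : oper) : oper := fun x y => T x (hsub y v).

Definition translate (S : subset) (v : X) : subset :=
  fun y => exists x, S x /\ y = hadd x v.

Definition closure (S : subset) : subset :=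
  fun y => forall eps, 0 < eps -> exists z, S z /\ hnorm (hsub y z) < eps.

Definition is_proj (C : subset) (x p : X) : Prop :=
  C p /\ forall c, C c -> hnorm (hsub x p) <= hnorm (hsub x c).

Definition Zv (A B : oper) (v : X) : subset :=
  zeros (op_add (lshift v A) (rshift B v)).
Definition Kv (A B : oper) (v : X) : subset :=
  zeros (op_add (op_inv (lshift v A)) (inv_vee (rshift B v))).

End Ops.

Arguments hsub {X}. Arguments hnorm {X}.
Arguments set_eq {X}. Arguments nonempty {X}.
Arguments monotone {X}. Arguments maximally_monotone {X}.
Arguments op_inv {X}. Arguments op_add {X}. Arguments image {X}.
Arguments zeros {X}. Arguments Fix {X}. Arguments ran {X}.
Arguments resolvent {X}. Arguments reflected {X}. Arguments DR {X}.
Arguments id_minus {X}. Arguments vee {X}. Arguments inv_vee {X}.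
Arguments lshift {X}. Arguments rshift {X}. Arguments pre_shift {X}.
Arguments post_shift {X}. Arguments translate {X}. Arguments closure {X}.
Arguments is_proj {X}. Arguments Zv {X}. Arguments Kv {X}.

(* Main.v *)
Require Import Defs.
From Stdlib Require Import Reals Lra.

Section H.
Variable X : Hilbert.

Lemma hinner_zero_l (w : X) : hinner hzero w = 0.
Proof.
  assert (E := hinner_add_l X hzero hzero w). rewrite hadd_0 in E. lra.
Qed.

Lemma hinner_opp_l (x w : X) : hinner (hopp x) w = - hinner x w.
Proof.
  assert (E := hinner_add_l X x (hopp x) w). rewrite hadd_opp, hinner_zero_l in E. lra.
Qed.

Lemma hext (a b : X) : (forall w, hinner a w = hinner b w) -> a = b.
Proof.
  intro H. assert (E : hadd a (hopp b) = hzero).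
  { apply hinner_def. rewrite hinner_add_l, hinner_opp_l, H. lra. }
  specialize (H hzero).
  assert (F : hinner (hadd a (hopp b)) (hadd a (hopp b)) = 0) by (rewrite E; apply hinner_zero_l).
  clear F.
  transitivity (hadd (hadd a (hopp b)) b).
  - rewrite <- hadd_assoc, (hadd_comm _ (hopp b) b).
    assert (G : hadd b (hopp b) = hzero) by apply hadd_opp.
    rewrite G, hadd_0. reflexivity.
  - rewrite E, hadd_comm, hadd_0. reflexivity.
Qed.
End H.

Hint Rewrite hinner_add_l hinner_scal_l hinner_opp_l hinner_zero_l : hdb.

Ltac lin := apply hext; intro w; unfold hsub; autorewrite with hdb; lra.

Ltac lin_h w := unfold hsub in *; autorewrite with hdb in *; lra.

Lemma uniq (X : Hilbert) (A : oper X) p z a b :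
  monotone A -> A p a -> A z b -> hsub a b = hscal (-1) (hsub p z) -> p = z.
Proof.
  intros Hm Ha Hb E. pose proof (Hm _ _ _ _ Ha Hb) as M. rewrite E in M.
  rewrite hinner_sym, hinner_scal_l in M.
  assert (D : hsub p z = hzero).
  { apply hinner_def. pose proof (hinner_pos X (hsub p z)). lra. }
  apply hext. intro w. pose proof (f_equal (fun t => hinner t w) D) as F. simpl in F.
  lin_h w.
Qed.
Section M.
Variable X : Hilbert.
Variables (A B : oper X) (v : X).

Lemma L_Fix x : pre_shift (DR A B) v x x <->
  exists p, A p (hsub (hadd x v) p) /\ B (hsub p v) (hsub p x).
Proof.
  split.
  - intros [r [s [[p [Hp Er]] [[q [Hq Es]] Ex]]]]. unfold resolvent in *.
    exists p. split; [exact Hp|].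
    assert (Eq : q = hsub p v).
    { apply hext; intro w. subst r s.
      pose proof (f_equal (fun t => hinner t w) Ex) as F; simpl in F. lin_h w. }
    subst q. replace (hsub p x) with (hsub r (hsub p v)); [exact Hq|].
    subst r. lin.
  - intros [p [Hp Hq]].
    exists (hsub (hscal 2 p) (hadd x v)), (hsub (hscal 2 (hsub p v)) (hsub (hscal 2 p) (hadd x v))).
    split; [exists p; split; [exact Hp| reflexivity]|].
    split; [exists (hsub p v); split; [|reflexivity]|].
    + unfold resolvent. replace (hsub (hsub (hscal 2 p) (hadd x v)) (hsub p v)) with (hsub p x); [exact Hq|lin].
    + lin.
Qed.

Lemma L_Zv z : Zv A B v z <-> exists c, A z (hadd c v) /\ B (hsub z v) (hopp c).
Proof.
  split.
  - intros [c [d [Hc [Hd E]]]]. exists c. split; [exact Hc|].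
    replace (hopp c) with d; [exact Hd|].
    apply hext; intro w. pose proof (f_equal (fun t => hinner t w) E) as F; simpl in F. lin_h w.
  - intros [c [Hc Hd]]. exists c, (hopp c). split; [exact Hc|]. split; [exact Hd|].
    symmetry. apply hadd_opp.
Qed.

Lemma L_Kv y : Kv A B v y <-> exists c, A c (hadd y v) /\ B (hsub c v) (hopp y).
Proof.
  split.
  - intros [c [d [Hc [Hd E]]]]. exists c. split; [exact Hc|].
    unfold inv_vee, vee, op_inv, rshift in Hd.
    replace c with (hopp d); [exact Hd|].
    apply hext; intro w. pose proof (f_equal (fun t => hinner t w) E) as F; simpl in F. lin_h w.
  - intros [c [Hc Hd]]. exists c, (hopp c). split; [exact Hc|]. split; [|symmetry; apply hadd_opp].
    unfold inv_vee, vee, op_inv, rshift.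
    replace (hopp (hopp c)) with c; [exact Hd|lin].
Qed.

Hypothesis HA : monotone A.

Lemma L_main z : Zv A B v z <-> exists x, pre_shift (DR A B) v x x /\ A z (hsub (hadd x v) z).
Proof.
  rewrite L_Zv. split.
  - intros [c [Hc Hd]]. exists (hadd z c). split.
    + apply L_Fix. exists z. split.
      * replace (hsub (hadd (hadd z c) v) z) with (hadd c v); [exact Hc|lin].
      * replace (hsub z (hadd z c)) with (hopp c); [exact Hd|lin].
    + replace (hsub (hadd (hadd z c) v) z) with (hadd c v); [exact Hc|lin].
  - intros [x [Hx Hz]]. apply L_Fix in Hx. destruct Hx as [p [Hp Hq]].
    assert (p = z) by (eapply uniq; [exact HA|exact Hp|exact Hz|lin]). subst p.
    exists (hsub x z). split.
    + replace (hadd (hsub x z) v) with (hsub (hadd x v) z); [exact Hz|lin].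
    + replace (hopp (hsub x z)) with (hsub z x); [exact Hq|lin].
Qed.
End M.

Theorem lemma4p1 (X : Hilbert) (A B : oper X) (v : X) :
  maximally_monotone A -> maximally_monotone B ->
  is_proj (closure (ran (id_minus (DR A B)))) hzero v ->
  (* (i) *)
  (set_eq (Zv A B v) (image (resolvent (lshift v A)) (Fix (pre_shift (DR A B) v))) /\
   set_eq (Zv A B v) (image (resolvent A) (translate (Fix (pre_shift (DR A B) v)) v)) /\
   set_eq (Zv A B v) (image (resolvent A) (Fix (post_shift v (DR A B))))) /\
  (* (ii) *)
  set_eq (Kv A B v)
    (image (id_minus (resolvent (lshift v A))) (Fix (pre_shift (DR A B) v))) /\
  (* (iii) *)
  ((nonempty (Kv A B v) <-> nonempty (Zv A B v)) /\
   (nonempty (Zv A B v) <-> ran (id_minus (DR A B)) v)).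
Proof.
  intros [HA _] _ _.
  split; [split; [|split]|split; [|split]].
  - intro z. rewrite L_main by exact HA. unfold image, resolvent, lshift, Fix.
    split; intros [x [Hx Hz]]; exists x; split; try exact Hx.
    + replace (hadd (hsub x z) v) with (hsub (hadd x v) z); [exact Hz|lin].
    + replace (hsub (hadd x v) z) with (hadd (hsub x z) v); [exact Hz|lin].
  - intro z. rewrite L_main by exact HA. unfold image, resolvent, translate, Fix.
    split.
    + intros [x [Hx Hz]]. exists (hadd x v). split; [exists x; split; [exact Hx|reflexivity]|exact Hz].
    + intros [y [[x [Hx Ey]] Hz]]. subst y. exists x. split; assumption.
  - intro z. rewrite L_main by exact HA. unfold image, resolvent, Fix, post_shift, pre_shift.
    split.
    + intros [x [Hx Hz]]. exists (hadd x v). split; [|exact Hz].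
      replace (hsub (hadd x v) v) with x; [exact Hx|lin].
    + intros [y [Hy Hz]]. exists (hsub y v).
      replace (hadd (hsub y v) v) with y by lin. split; assumption.
  - intro y. rewrite L_Kv. unfold image, id_minus, resolvent, lshift, Fix. split.
    + intros [c [Hc Hd]]. exists (hadd y c). split.
      * apply L_Fix. exists c. split.
        -- replace (hsub (hadd (hadd y c) v) c) with (hadd y v); [exact Hc|lin].
        -- replace (hsub c (hadd y c)) with (hopp y); [exact Hd|lin].
      * exists c. split; [|lin].
        replace (hadd (hsub (hadd y c) c) v) with (hadd y v); [exact Hc|lin].
    + intros [x [Hx [z [Hz Ey]]]]. apply L_Fix in Hx. destruct Hx as [p [Hp Hq]].
      assert (p = z) by (eapply uniq; [exact HA|exact Hp|exact Hz|lin]). subst p y.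
      exists z. split; [exact Hz|].
      replace (hopp (hsub x z)) with (hsub z x); [exact Hq|lin].
  - split; intros [y Hy].
    + apply L_Kv in Hy. destruct Hy as [c [Hc Hd]]. exists c. apply L_Zv. exists y. split; assumption.
    + apply L_Zv in Hy. destruct Hy as [c [Hc Hd]]. exists c. apply L_Kv. exists y. split; assumption.
  - split.
    + intros [z Hz]. apply L_main in Hz; [|exact HA]. destruct Hz as [x [Hx _]].
      exists (hadd x v), x. split; [exact Hx|lin].
    + intros [x [z [Hz Ev]]]. subst v.
      assert (Hf : pre_shift (DR A B) (hsub x z) z z).
      { unfold pre_shift. replace (hadd z (hsub x z)) with x by lin. exact Hz. }
      pose proof Hf as Hf'. apply L_Fix in Hf'. destruct Hf' as [p [Hp _]].
      exists p. apply L_main; [exact HA|]. exists z. split; assumption.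
Qed.
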